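(* For any $C<\infty$, $$\mathbf P\Big(I^{[-n,n]\times\{0\}}_1\nsubseteq[-n-\log n,\,n+\log n]\times[0,\log n]\Big)<\frac{1}{n^{C}}$$ for all sufficiently large $n$.
   Context: $\mathbb{H}=\{(x_1,x_2)\in\mathbb{Z}^2:x_2\ge0\}$. To each directed nearest-neighbour edge $x\to y$ in $\mathbb{H}$ attach an independent Poisson process $N^{x\to y}$ of intensity $\max(\sqrt{x_2},1)$. For $x\in\mathbb{H}$ and $t\ge0$, $I^x_t$ is the set of $y\in\mathbb{H}$ such that there are a nearest-neighbour path $x=y_0,y_1,\dots,y_m=y$ in $\mathbb{H}$ ($m\ge0$) and times $0<s_1<\dots<s_m\le t$ with $N^{y_{i-1}\to y_i}$ having an arrival at time $s_i$ for each $i$. For $V\subset\mathbb{H}$, $I^V_t=\bigcup_{x\in V}I^x_t$ (this is the interface process started from $V$, in which each occupied site $x$ tries to occupy each neighbour at rate $\max(\sqrt{x_2},1)$). *)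

(* Defs.v *)
From HB Require Import structures.
From mathcomp Require Import all_boot all_order all_algebra.
From mathcomp Require Import all_classical all_reals all_analysis.
Set Implicit Arguments. Unset Strict Implicit. Unset Printing Implicit Defensive.
Import Order.TTheory GRing.Theory Num.Theory.
Local Open Scope classical_set_scope.
Local Open Scope ring_scope.

Definition site := (int * int)%type.
Definition inH (x : site) : Prop := (0 <= x.2)%R.
Definition nn (x y : site) : Prop := (`|x.1 - y.1| + `|x.2 - y.2| = 1)%R.
Definition edgeH (x y : site) : Prop := inH x /\ inH y /\ nn x y.

Definition rate (R : realType) (x : site) : R := Num.max (Num.sqrt (x.2%:~R)) 1.

Definition poisson_pmf (R : realType) (mu : R) (k : nat) : R :=
  expR (- mu) * mu ^+ k / (k`!)%:R.

Definition npts (R : realType) (A : set R) (s t : R) (k : nat) : Prop :=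
  exists l : seq R, uniq l /\ size l = k /\
    (forall u, (u \in l) <-> (A u /\ s < u /\ u <= t)).

(* A x y w : set of arrival times of the process N^{x->y} at sample point w.
   The family (N^{x->y}) over the directed edges of H is a family of
   independent Poisson processes with intensities rate x: for any finitely many
   (edge, interval) pairs, with intervals on a common edge pairwise disjoint,
   the joint law of the counts is the product of Poisson laws. *)
Definition indep_poisson_family (R : realType) (d : measure_display)
    (T : measurableType d) (P : probability T R)
    (A : site -> site -> T -> set R) : Prop :=
  forall (m : nat) (x y : 'I_m -> site) (s t : 'I_m -> R) (c : 'I_m -> nat),
    (forall i, edgeH (x i) (y i) /\ 0 <= s i /\ s i <= t i) ->
    (forall i j, i != j -> x i = x j -> y i = y j -> t i <= s j \/ t j <= s i) ->
    measurable [set w | forall i, npts (A (x i) (y i) w) (s i) (t i) (c i)] /\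
    P [set w | forall i, npts (A (x i) (y i) w) (s i) (t i) (c i)] =
      (\prod_(i < m) poisson_pmf (rate R (x i) * (t i - s i)) (c i))%:E.

Inductive reach (R : realType) (T : Type) (A : site -> site -> T -> set R)
    (w : T) : site -> R -> site -> R -> Prop :=
  | reach_nil : forall x s t, reach A w x s x t
  | reach_step : forall x z y s u t,
      edgeH x z -> A x z w u -> s < u -> u <= t ->
      reach A w z u y t -> reach A w x s y t.

Definition I_proc (R : realType) (T : Type) (A : site -> site -> T -> set R)
    (w : T) (x : site) (t : R) : set site := [set y | reach A w x 0 y t].
Definition I_procV (R : realType) (T : Type) (A : site -> site -> T -> set R)
    (w : T) (V : set site) (t : R) : set site :=
  [set y | exists2 x, V x & I_proc A w x t y].

Definition segment0 (n : nat) : set site :=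
  [set x | (- (n%:Z) <= x.1 <= n%:Z)%R /\ x.2 = 0%R].
Definition box (R : realType) (n : nat) : set site :=
  [set y | - (n%:R) - ln (n%:R) <= (y.1%:~R : R) <= n%:R + ln (n%:R) /\
           0 <= (y.2%:~R : R) <= ln (n%:R)].

(* Main.v *)
Require Import Defs.
From HB Require Import structures.
From mathcomp Require Import all_boot all_order all_algebra.
From mathcomp Require Import all_classical all_reals all_analysis.
From mathcomp Require Import zify ring lra.
Import Order.TTheory GRing.Theory Num.Theory.
Local Open Scope classical_set_scope.
Local Open Scope ring_scope.


Definition sadd (x y : site) : site := (x.1 + y.1, x.2 + y.2).

Definition dirn (k : 'I_4) : site :=
  match nat_of_ord k with
  | 0 => (1, 0) | 1 => (-1, 0) | 2 => (0, 1) | _ => (0, -1) end.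

Definition dir_of (x y : site) : 'I_4 :=
  if y.1 == x.1 + 1 then inord 0 else if y.1 == x.1 - 1 then inord 1
  else if y.2 == x.2 + 1 then inord 2 else inord 3.

Lemma nn_dir x y : nn x y -> y = sadd x (dirn (dir_of x y)).
Proof.
rewrite /nn /dir_of /sadd; case: x y => [x1 x2] [y1 y2] /= H.
have [e1|n1] := eqVneq y1 (x1 + 1).
  rewrite /dirn inordK //=; congr pair; lia.
have [e2|n2] := eqVneq y1 (x1 - 1).
  rewrite /dirn inordK //=; congr pair; lia.
have [e3|n3] := eqVneq y2 (x2 + 1).
  rewrite /dirn inordK //=; congr pair; lia.
rewrite /dirn inordK //=; congr pair; lia.
Qed.

Lemma nn_sadd x k : nn x (sadd x (dirn k)).
Proof.
rewrite /nn /sadd /dirn; case: k => [[|[|[|[|k]]]] hk] //=; lia.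
Qed.

Lemma dirn2 k : (dirn k).2 <= 1.
Proof. by rewrite /dirn; case: k => [[|[|[|[|k]]]] hk]. Qed.

Fixpoint pv (x : site) (dd : nat -> 'I_4) (i : nat) : site :=
  if i is i'.+1 then sadd (pv x dd i') (dirn (dd i')) else x.

Lemma pv_height x dd i : (pv x dd i).2 <= x.2 + i%:Z.
Proof.
elim: i => [|i IH] /=; first by rewrite addr0.
have := dirn2 (dd i); rewrite /sadd /=; lia.
Qed.

Section Paths.
Variables (R : realType) (T : Type) (A : site -> site -> T -> set R) (w : T).

Fixpoint vpath (x : site) (s : R) (l : seq (site * R)) (t : R) : Prop :=
  if l is (z, u) :: l' then edgeH x z /\ A x z w u /\ s < u /\ u <= t /\ vpath z u l' t
  else True.

Lemma vpath_take x s l t k : vpath x s l t -> vpath x s (take k l) t.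
Proof.
elim: l x s k => [|[z u] l IH] x s [|k] //= [? [? [? [? H]]]]; refine (conj _ (conj _ (conj _ (conj _ _)))) => //.
exact: IH.
Qed.

Lemma vpath_mono x s s' l t : s' <= s -> vpath x s l t -> vpath x s' l t.
Proof.
case: l => [|[z u] l] //= hs [? [? [su [? H]]]]; refine (conj _ (conj _ (conj _ (conj _ _)))) => //.
exact: le_lt_trans hs su.
Qed.

Lemma vpath_drop x s l t k : (k < size l)%N -> vpath x s l t ->
  s < (nth (x, s) l k).2 /\ vpath (nth (x, s) l k).1 (nth (x, s) l k).2 (drop k.+1 l) t.
Proof.
elim: l x s k => [|[z u] l IH] x s [|k] //= hk [? [? [hsu [? H]]]].
  by rewrite drop0.
have [h1 h2] := IH z u k hk H.
have e : nth (x, s) l k = nth (z, u) l k by apply: set_nth_default.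
rewrite e; split => //; exact: lt_trans hsu h1.
Qed.

Lemma last_drop_gen (U : Type) (a b : U) (s : seq U) k : (k < size s)%N ->
  last a (drop k s) = last b s.
Proof.
elim: s a b k => [|c s IH] a b [|k] //= hk.
case: s IH hk => [|c' s] IH hk //=.
rewrite (IH a c k) //.
Qed.

Lemma reach_vpath x s y t : reach A w x s y t ->
  exists l, vpath x s l t /\ uniq (x :: map fst l) /\ last x (map fst l) = y.
Proof.
elim => {x s y t} [x s t|x z y s u t exz Axz su ut _ [l [vl [ul ll]]]].
  by exists [::].
have [xin|xnin] := boolP (x \in z :: map fst l); last first.
  exists ((z, u) :: l) => /=; split; first by refine (conj _ (conj _ (conj _ (conj _ _)))) => //.
  by rewrite xnin.
rewrite inE in xin; case/orP: xin => [/eqP exz'|xin].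
  subst z; exists l; split; first exact: vpath_mono (ltW su) vl.
  by [].
set k := index x (map fst l).
have hk : (k < size l)%N by rewrite -(size_map fst) index_mem.
have [h1 h2] := vpath_drop _ _ _ _ _ hk vl.
have ex : (nth (z, u) l k).1 = x.
  by rewrite -(nth_map (z, u) z) // nth_index.
rewrite ex in h2.
exists (drop k.+1 l); split.
  apply: vpath_mono h2; apply: ltW; exact: lt_trans su h1.
have edrop : x :: map fst (drop k.+1 l) = drop k (map fst l).
  by rewrite map_drop [in RHS](drop_nth z) ?size_map // /k nth_index.
split.
  rewrite edrop; apply: drop_uniq; by case/andP: ul.
rewrite -ll.
have -> : last x [seq i.1 | i <- drop k.+1 l] = last z (x :: [seq i.1 | i <- drop k.+1 l]) by [].
by rewrite edrop (last_drop_gen _ z z) // size_map.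
Qed.

Lemma vpath_nth x s l t : vpath x s l t -> forall i, (i < size l)%N ->
  edgeH (nth x (x :: map fst l) i) (nth x (x :: map fst l) i.+1) /\
  A (nth x (x :: map fst l) i) (nth x (x :: map fst l) i.+1) w (nth s (map snd l) i) /\
  s < nth s (map snd l) i /\ nth s (map snd l) i <= t /\
  ((i.+1 < size l)%N -> nth s (map snd l) i < nth s (map snd l) i.+1).
Proof.
elim: l x s => [|[z u] l IH] x s //= [exz [Axz [su [ut H]]]] [|i] hi /=.
  refine (conj _ (conj _ (conj _ (conj _ _)))) => //.
  case: l H {IH hi} => [|[z' u'] l'] //= [_ [_ [h _]]] _; exact: h.
have [h1 [h2 [h3 [h4 h5]]]] := IH z u H i hi.
have e1 : nth x (z :: [seq i.1 | i <- l]) i = nth z (z :: [seq i.1 | i <- l]) i.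
  by apply: set_nth_default => /=; rewrite size_map ltnS ltnW.
have e2 : nth x [seq i.1 | i <- l] i = nth z [seq i.1 | i <- l] i.
  by apply: set_nth_default; rewrite size_map.
have e3 : forall j, (j < size l)%N -> nth s [seq i.2 | i <- l] j = nth u [seq i.2 | i <- l] j.
  by move=> j hj; apply: set_nth_default; rewrite size_map.
rewrite e1 e2 (e3 i) //.
refine (conj h1 (conj h2 (conj _ (conj h4 _)))).
  exact: lt_trans su h3.
move=> hi2; rewrite e3 //; exact: h5.
Qed.

Lemma vpath_dist x s l t : vpath x s l t ->
  `|(last x (map fst l)).1 - x.1| + `|(last x (map fst l)).2 - x.2| <= (size l)%:Z.
Proof.
elim: l x s => [|[z u] l IH] x s /=.
  by move=> _; rewrite !subrr.
move=> [[_ [_ hn]] [_ [_ [_ H]]]]; have := IH z u H; move: hn; rewrite /nn.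
set y := last z _; lia.
Qed.

Lemma vpath_inH x s l t : vpath x s l t -> inH x -> inH (last x (map fst l)).
Proof.
elim: l x s => [|[z u] l IH] x s //= [[_ [hz _]] [_ [_ [_ H]]]] _; exact: IH H hz.
Qed.

End Paths.
Arguments vpath {R T} A w x s l t.
Arguments vpath_take {R T A w x s l t} k.
Arguments vpath_nth {R T A w x s l t}.
Arguments vpath_dist {R T A w x s l t}.
Arguments vpath_inH {R T A w x s l t}.
Arguments reach_vpath {R T A w x s y t}.


Section Cover.
Variables (R : realType) (T : Type) (A : site -> site -> T -> set R) (n k : nat).
Local Notation K := k.+1.

Definition IT := ('I_(2 * n).+1 * {ffun 'I_K -> 'I_4} * {ffun 'I_K -> 'I_K})%type.
Definition start (a : 'I_(2 * n).+1) : site := ((a : nat)%:Z - n%:Z, 0).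
Definition ddf (d : {ffun 'I_K -> 'I_4}) (i : nat) : 'I_4 :=
  if insub i is Some o then d o else ord0.
Definition V (p : IT) (i : nat) : site := pv (start p.1.1) (ddf p.1.2) i.
Definition lo (j : 'I_K) : R := j%:R / K%:R.
Definition hi (j : 'I_K) : R := (j.+1)%:R / K%:R.
Definition good (p : IT) : bool :=
  [&& [forall i : 'I_K, forall i' : 'I_K, (V p i == V p i') ==> (i == i')],
      [forall i : 'I_K.+1, 0 <= (V p i).2] &
      [forall i : 'I_K, forall i' : 'I_K, (i <= i')%N ==> (p.2 i <= p.2 i')%N]].
Definition G (p : IT) : set T :=
  [set w | forall i : 'I_K, exists u, A (V p i) (V p i.+1) w u /\ lo (p.2 i) < u /\ u <= hi (p.2 i)].
Definition Bset : set T := \big[setU/set0]_(p | good p) G p.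

Definition slot (u : R) : 'I_K := inord (absz (Num.ceil (u * K%:R))).-1.

Lemma slot_val u : 0 < u -> u <= 1 ->
  (slot u : nat)%:Z = Num.ceil (u * K%:R) - 1 /\ 1 <= Num.ceil (u * K%:R) <= K%:Z.
Proof.
move=> u0 u1.
have hK : (0 : R) < K%:R by rewrite ltr0n.
have c1 : 1 <= Num.ceil (u * K%:R).
  have : ~~ (Num.ceil (u * K%:R) <= 0) by rewrite ceil_le0 -ltNge mulr_gt0.
  lia.
have cK : Num.ceil (u * K%:R) <= K%:Z.
  by rewrite ceil_le_int /= -[X in _ <= X]mul1r ler_wpM2r // ltW.
rewrite /slot inordK; last by move: c1 cK; apply: (fun c (h1 : 1 <= c) (h2 : c <= K%:Z) => _ : ((absz c).-1 < K)%N); lia.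
split; last by apply/andP.
by move: c1; apply: (fun c (h1 : 1 <= c) => _ : ((absz c).-1)%:Z = c - 1); lia.
Qed.

Lemma slotP u : 0 < u -> u <= 1 -> lo (slot u) < u /\ u <= hi (slot u).
Proof.
move=> u0 u1; have [e _] := slot_val _ u0 u1.
have hK : (0 : R) < K%:R by rewrite ltr0n.
have := ceil_itv (u * K%:R); case/andP => h1 h2.
rewrite /lo /hi ltr_pdivrMr // ler_pdivlMr //.
have -> : ((slot u)%:R : R) = ((slot u : nat)%:Z)%:~R by [].
rewrite e; split; first exact: h1.
have e2 : ((slot u).+1 : nat)%:Z = Num.ceil (u * K%:R) by rewrite -addn1 PoszD e subrK.
by rewrite -[X in _ <= X]/((((slot u).+1 : nat)%:Z)%:~R : R) e2.
Qed.

Lemma slot_mono u u' : 0 < u -> u <= u' -> u' <= 1 -> (slot u <= slot u')%N.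
Proof.
move=> u0 uu u1.
have [e _] := slot_val _ u0 (le_trans uu u1).
have [e' _] := slot_val _ (lt_le_trans u0 uu) u1.
have : Num.ceil (u * K%:R) <= Num.ceil (u' * K%:R).
  by apply: le_ceil; rewrite ler_wpM2r // ler0n.
rewrite -lez_nat e e'.
by apply: (fun c c' (h : c <= c') => _ : c - 1 <= c' - 1); lia.
Qed.

Lemma in_Bset p w : good p -> G p w -> Bset w.
Proof. by move=> gp Gw; rewrite /Bset (bigD1 p) //=; left. Qed.

Lemma u_mono (l : seq (site * R)) (s0 : R) :
  (forall i, (i.+1 < size l)%N -> nth s0 (map snd l) i < nth s0 (map snd l) i.+1) ->
  forall i i', (i <= i')%N -> (i' < size l)%N -> nth s0 (map snd l) i <= nth s0 (map snd l) i'.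
Proof.
move=> H i i' hii'; rewrite -(subnKC hii'); elim: (i' - i)%N => [|m IH] hm.
  by rewrite addn0.
apply: le_trans (IH _) _; first by apply: leq_ltn_trans hm; rewrite addnS.
by rewrite addnS; apply/ltW/H; rewrite -addnS.
Qed.

Lemma cover_bad : ((K%:R : R) <= ln (n%:R : R)) ->
  [set w | ~ (I_procV A w (segment0 n) 1 `<=` box R n)] `<=` Bset.
Proof.
move=> hK w /= /nonsubset [y [[x segx rxy] nby]].
have [l [vl [ul ll]]] := reach_vpath rxy.
case: segx => [/andP [hx1' hx2'] hx0'].
have hx1 : - (n%:Z) <= x.1 := hx1'.
have hx2 : x.1 <= n%:Z := hx2'.
have hx0 : x.2 = 0 := hx0'.
clear hx1' hx2' hx0'.
have inHx : inH x by rewrite /inH hx0.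
have kln : (k%:R : R) <= ln n%:R by apply: le_trans hK; rewrite ler_nat.
have szl : (K <= size l)%N.
  rewrite leqNgt; apply/negP => hsz; apply: nby.
  have hd := vpath_dist vl; have hy := vpath_inH vl inHx; rewrite ll in hd hy.
  have {}hy : 0 <= y.2 := hy.
  have h0 : ((size l)%:Z <= k%:Z) by lia.
  have h00 : `|y.1 - x.1| <= k%:Z by lia.
  have h1 : ((- (n%:Z) - k%:Z)%R <= y.1) by lia.
  have h2 : (y.1 <= (n%:Z + k%:Z)%R) by lia.
  have h3 : (y.2 <= k%:Z) by lia.
  rewrite -(ler_int R) intrB intrN in h1.
  rewrite -(ler_int R) intrD in h2.
  rewrite -(ler_int R) in h3.
  rewrite -(ler_int R) in hy.
  move: h1 h2 h3 hy; rewrite /box /=.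
  rewrite -[((n%:Z)%:~R : R)]/(n%:R) -[((k%:Z)%:~R : R)]/(k%:R) -[((0 : int)%:~R : R)]/(0 : R).
  move=> h1 h2 h3 hy.
  have ln0 : (0 : R) <= ln n%:R by apply: le_trans kln; rewrite ler0n.
  split; apply/andP; split; lra.
set l' := take K l.
have vl' : vpath A w x 0 l' 1 := vpath_take K vl.
have sz' : size l' = K by rewrite size_takel.
have ul' : uniq (x :: map fst l').
  have -> : x :: map fst l' = take K.+1 (x :: map fst l) by rewrite /l' map_take.
  exact: take_uniq.
have E := vpath_nth vl'.
rewrite sz' in E.
set v := fun i => nth x (x :: map fst l') i.
set u := fun i => nth 0 (map snd l') i.
have ha : (absz (x.1 + n%:Z)%R < (2 * n).+1)%N by lia.
set a : 'I_(2 * n).+1 := Ordinal ha.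
have sa : start a = x.
  rewrite /start [RHS]surjective_pairing /=; congr pair; [lia | by rewrite hx0].
set d : {ffun 'I_K -> 'I_4} := [ffun o : 'I_K => dir_of (v o) (v o.+1)].
set j : {ffun 'I_K -> 'I_K} := [ffun o : 'I_K => slot (u o)].
set p : IT := (a, d, j).
have HV : forall i, (i <= K)%N -> V p i = v i.
  elim=> [|i IH] hi; first by rewrite /V /= sa.
  rewrite /V /= -/(V p i) IH ?(ltnW hi) // /ddf.
  case: insubP => [ii _ ho | nP]; last by rewrite hi in nP.
  rewrite ffunE ho.
  have [[_ [_ hn]] _] := E i hi.
  exact/esym/nn_dir.
have umono : forall i i', (i <= i')%N -> (i' < K)%N -> u i <= u i'.
  move=> i i' hii' hi'; apply: (u_mono l' 0) => //; last by rewrite sz'.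
  by move=> m; rewrite sz' => hm; have [_ [_ [_ [_ h]]]] := E m (ltnW hm); apply: h.
apply: (@in_Bset p).
  rewrite /good; apply/and3P; split.
  - apply/forallP => i; apply/forallP => i'; apply/implyP.
    rewrite (HV i (ltnW (ltn_ord i))) (HV i' (ltnW (ltn_ord i'))).
    move=> /eqP e; apply/eqP; apply: val_inj => /=; apply/eqP.
    rewrite -(nth_uniq x _ _ ul'); first by apply/eqP.
      by rewrite /= size_map sz' ltnS ltnW.
    by rewrite /= size_map sz' ltnS ltnW.
  - apply/forallP => i; rewrite (HV i (ltn_ord i)); case: i => [[|i] hi] /=.
      by [].
    by have [[_ [h _]] _] := E i hi.
  - apply/forallP => i; apply/forallP => i'; apply/implyP => hii'; rewrite /= !ffunE.
    have [_ [_ [h0 [h1 _]]]] := E i (ltn_ord i).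
    have [_ [_ [h0' [h1' _]]]] := E i' (ltn_ord i').
    by apply: slot_mono h0 (umono _ _ hii' (ltn_ord i')) h1'.
move=> i; exists (u i); rewrite (HV i (ltnW (ltn_ord i))) (HV i.+1 (ltn_ord i)).
have [_ [hA [h0 [h1 _]]]] := E i (ltn_ord i).
split; first exact: hA.
rewrite /= ffunE; exact: slotP.
Qed.

End Cover.
Arguments IT : clear implicits.
Arguments V {n k} p i.
Arguments lo {R k} j.
Arguments hi {R k} j.
Arguments good {n k} p.
Arguments G {R T} A {n k} p.
Arguments Bset {R T} A n k.
Arguments cover_bad {R T A n k}.
Arguments start {n} a.
Arguments ddf {k} d i.
Arguments slot {R k} u.


Lemma npts0 (R : realType) (S : set R) a b :
  npts S a b 0 <-> ~ (exists u, S u /\ a < u /\ u <= b).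
Proof.
split.
  case=> l [_ [hs hl]] [u hu]; have := (hl u).2 hu.
  by case: l hs hl => [|? ?].
move=> hn; exists [::]; split => //; split => // u; split => // hu.
by exfalso; apply: hn; exists u.
Qed.

Section Prob.
Variables (R : realType) (d : measure_display) (T : measurableType d)
  (P : probability T R) (A : site -> site -> T -> set R).
Hypothesis HP : indep_poisson_family P A.

Section Fam.
Variables (m : nat) (x y : 'I_m -> site) (s t : 'I_m -> R).
Hypothesis hE : forall i, edgeH (x i) (y i) /\ 0 <= s i /\ s i <= t i.
Hypothesis hx : injective x.

Definition Zev (i : 'I_m) : set T := [set w | npts (A (x i) (y i) w) (s i) (t i) 0].
Definition Eev (Zs Gs : {set 'I_m}) : set T :=
  [set w | (forall i, i \in Zs -> Zev i w) /\ (forall i, i \in Gs -> ~ Zev i w)].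
Definition ee i : R := expR (- (rate R (x i) * (t i - s i))).

Lemma Eev_base Zs : measurable (Eev Zs (finset.set0)) /\
  P (Eev Zs (finset.set0)) = (\prod_(i in Zs) ee i)%:E.
Proof.
pose s' i := if i \in Zs then s i else 0.
pose t' i := if i \in Zs then t i else 0.
have H1 : forall i, edgeH (x i) (y i) /\ 0 <= s' i /\ s' i <= t' i.
  move=> i; have [h1 [h2 h3]] := hE i; rewrite /s' /t'.
  by case: (i \in Zs).
have H2 : forall i j, i != j -> x i = x j -> y i = y j -> t' i <= s' j \/ t' j <= s' i.
  by move=> i j /eqP hij /hx.
have [hm hp] := HP m x y s' t' (fun=> 0%N) H1 H2.
have eq : Eev Zs (finset.set0) = [set w | forall i, npts (A (x i) (y i) w) (s' i) (t' i) 0].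
  apply/seteqP; split => w /=.
    move=> [hZ _] i; rewrite /s' /t'; case: ifP => hi; first exact: hZ.
    by apply/npts0 => -[u [_ [h1 h2]]]; have := lt_le_trans h1 h2; rewrite ltxx.
  move=> h; split; last by move=> i; rewrite inE.
  by move=> i hi; have := h i; rewrite /s' /t' hi.
rewrite eq; split => //; rewrite hp; congr EFin.
rewrite [RHS]big_mkcond /=; apply: eq_bigr => i _.
rewrite /Defs.poisson_pmf expr0 fact0 divr1 mulr1 /s' /t' /ee.
by case: (i \in Zs) => //; rewrite subrr mulr0 oppr0 expR0.
Qed.

Lemma Eev_prob N : forall Zs Gs : {set 'I_m}, #|Gs| = N -> (forall i, i \in Zs -> i \notin Gs) ->
  measurable (Eev Zs Gs) /\
  P (Eev Zs Gs) = (\prod_(i in Zs) ee i * \prod_(i in Gs) (1 - ee i))%:E.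
Proof.
elim: N => [|N IH] Zs Gs hc hdis.
  rewrite (cards0_eq hc) big_set0 mulr1; exact: Eev_base.
have [g gG] : exists g, g \in Gs.
  by apply/set0Pn; rewrite -card_gt0 hc.
set Gs' := Gs :\ g.
have hc' : #|Gs'| = N.
  by move: hc; rewrite (cardsD1 g Gs) gG add1n => -[].
have gZ : g \notin Zs by apply/negP => /hdis; rewrite gG.
have gG' : g \notin Gs' by rewrite /Gs' setD11.
have dis1 : forall i, i \in Zs -> i \notin Gs'.
  by move=> i /hdis; rewrite /Gs' in_setD1 => /negbTE ->; rewrite andbF.
have dis2 : forall i, i \in g |: Zs -> i \notin Gs'.
  move=> i; rewrite in_setU1 => /orP [/eqP -> //|]; exact: dis1.
have [m1 p1] := IH Zs Gs' hc' dis1.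
have [m2 p2] := IH (g |: Zs) Gs' hc' dis2.
have eq : Eev Zs Gs = Eev Zs Gs' `\` Eev (g |: Zs) Gs'.
  apply/seteqP; split => w /=.
    move=> [hZ hG]; split.
      by split => // i; rewrite /Gs' in_setD1 => /andP [_ /hG].
    move=> [hZ' _]; apply: (hG g gG); apply: hZ'; exact: setU11.
  move=> [[hZ hG'] hn]; split => // i iG.
  have [->|ig] := eqVneq i g.
    move=> hZg; apply: hn; split => // i'; rewrite in_setU1 => /orP [/eqP -> //|]; exact: hZ.
  by apply: hG'; rewrite /Gs' in_setD1 ig.
have sub : Eev (g |: Zs) Gs' `<=` Eev Zs Gs'.
  by move=> w /= [hZ hG]; split => // i hi; apply: hZ; rewrite in_setU1 hi orbT.
rewrite eq; split; first exact: measurableD.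
rewrite measureD //; last first.
  by apply: le_lt_trans (probability_le1 P m1) _; rewrite ltey.
rewrite setIidr //.
set a1 := \prod_(i in Zs) ee i * \prod_(i in Gs') (1 - ee i).
set a2 := \prod_(i in g |: Zs) ee i * \prod_(i in Gs') (1 - ee i).
apply: (@eq_trans _ _ (a1%:E - a2%:E)%E); first by congr (_ - _)%E; [exact: p1 | exact: p2].
rewrite -EFinB; congr EFin; rewrite /a1 /a2.
rewrite big_setU1 //= -(finset.setD1K gG) big_setU1 //= -/Gs'.
ring.
Qed.

Lemma Eev_all : measurable (Eev finset.set0 [set: 'I_m]%SET) /\
  (P (Eev finset.set0 [set: 'I_m]%SET) <= (\prod_(i < m) (rate R (x i) * (t i - s i)))%:E)%E.
Proof.
have [hm hp] := @Eev_prob #|[set: 'I_m]%SET| finset.set0 [set: 'I_m]%SET erefl (fun i => ltac:(by rewrite inE)).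

split => //; rewrite hp big_set0 mul1r lee_fin.
have -> : \prod_(i in [set: 'I_m]%SET) (1 - ee i) = \prod_(i < m) (1 - ee i).
  by apply: eq_bigl => i; rewrite inE.
apply: ler_prod => i _; have [[hxi _] [h0 h1]] := hE i.
have hr : 0 <= rate R (x i) by rewrite /rate le_max ler01 orbT.
have hmu : 0 <= rate R (x i) * (t i - s i) by rewrite mulr_ge0 // subr_ge0.
apply/andP; split.
  by rewrite subr_ge0 /ee expR_le1 oppr_le0.
have := expR_ge1Dx (- (rate R (x i) * (t i - s i))); rewrite /ee; lra.
Qed.
End Fam.
Arguments Eev {m} x y s t Zs Gs.
Lemma G_bound (n k : nat) (p : IT n k) : good p ->
  measurable (G A p) /\
  (P (G A p) <= ((Num.sqrt (k.+1)%:R / (k.+1)%:R) ^+ k.+1)%:E)%E.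
Proof.
case/and3P => /forallP hinj /forallP hH /forallP hmono.
pose xx (i : 'I_k.+1) := V p i.
pose yy (i : 'I_k.+1) := V p i.+1.
pose ss (i : 'I_k.+1) : R := lo (p.2 i).
pose tt (i : 'I_k.+1) : R := hi (p.2 i).
have hK : (0 : R) < (k.+1)%:R by rewrite ltr0n.
have hlh : forall j : 'I_k.+1, (hi j - lo j : R) = 1 / (k.+1)%:R.
  by move=> j; rewrite /hi /lo -mulrBl -natrB // subSnn mul1r.
have hE : forall i, edgeH (xx i) (yy i) /\ 0 <= ss i /\ ss i <= tt i.
  move=> i; split.
    split; first by have := hH (widen_ord (leqnSn _) i).
    split; first by have := hH (lift ord0 i).
    exact: nn_sadd.
  split; first by rewrite /ss /lo divr_ge0 // ler0n.
  by rewrite -subr_ge0 /ss /tt hlh divr_ge0 // ler0n.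
have hx : injective xx.
  by move=> i i' e; apply/eqP; have := hinj i => /forallP /(_ i') /implyP; apply; apply/eqP.
have eq : G A p = Eev xx yy ss tt finset.set0 [set: 'I_k.+1]%SET.
  apply/seteqP; split => w /=.
    move=> h; split; first by move=> i; rewrite inE.
    move=> i _ hz; move/npts0: hz; apply; exact: h i.
  move=> [_ h] i; have := h i; rewrite inE => /(_ isT) hn.
  apply: contrapT => hne; apply: hn; exact/npts0.
have [hm hp] := Eev_all _ _ _ _ _ hE hx.
rewrite eq; split => //; apply: le_trans hp _; rewrite lee_fin.
rewrite -[X in _ <= _ ^+ X](card_ord k.+1) -prodr_const.
apply: ler_prod => i _; rewrite /tt /ss hlh mul1r.
have hr0 : 0 <= rate R (xx i) by rewrite /rate le_max ler01 orbT.
apply/andP; split; first by rewrite divr_ge0 // ltW.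
rewrite ler_pM2r ?invr_gt0 //.
rewrite /rate ge_max; apply/andP; split.
  apply: ler_wsqrtr; have := pv_height (start p.1.1) (ddf p.1.2) i.
  rewrite /xx /V /start /= add0r => h.
  have : (V p i).2 <= k.+1 by apply: le_trans h _; rewrite lez_nat ltnW.
  by rewrite -(ler_int R) /V.
rewrite -[X in X <= _]sqrtr1; apply: ler_wsqrtr; by rewrite ler1n.
Qed.
Lemma ub (I : Type) (r : seq I) (q : pred I) (F : I -> set T) :
  (forall i, q i -> measurable (F i)) ->
  measurable (\big[setU/set0]_(i <- r | q i) F i) /\
  (P (\big[setU/set0]_(i <- r | q i) F i) <= \sum_(i <- r | q i) P (F i))%E.
Proof.
move=> hF; elim: r => [|i r [IHm IHp]].
  by rewrite !big_nil measure0; split.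
rewrite !big_cons; case: ifP => qi //.
split; first exact: measurableU (hF i qi) IHm.
apply: le_trans (measureU2 _ (hF i qi) IHm) _.
by rewrite leeD2l.
Qed.

Lemma Bset_bound (n k : nat) : measurable (Bset A n k) /\
  (P (Bset A n k) <= (#|[pred p : IT n k | good p]|%:R *
      (Num.sqrt (k.+1)%:R / (k.+1)%:R) ^+ k.+1)%:E)%E.
Proof.
have hG : forall p : IT n k, good p -> measurable (G A p).
  by move=> p gp; have [] := G_bound n k p gp.
have [hm hp] := ub _ (index_enum (IT n k)) good _ hG.
split; first exact: hm.
have h2 : (\sum_(p <- index_enum (IT n k) | good p) P (G A p) <=
   \sum_(p <- index_enum (IT n k) | good p)
   ((Num.sqrt (k.+1)%:R / (k.+1)%:R) ^+ k.+1)%:E)%E.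
  by apply: lee_sum => p gp; have [] := G_bound n k p gp.
apply: le_trans hp (le_trans h2 _).
rewrite sumEFin lee_fin sumr_const mulr_natl.
by rewrite /=.
Qed.
End Prob.


Section Card.
Variable k : nat.
Local Notation K := k.+1.
Local Notation W := (k.+1 + k).+1.

Definition Sj (j : {ffun 'I_K -> 'I_K}) : {set 'I_W} :=
  [set (inord (j i + i) : 'I_W) | i : 'I_K].

Definition monof (j : {ffun 'I_K -> 'I_K}) :=
  forall i i' : 'I_K, (i <= i')%N -> (j i <= j i')%N.

Lemma Sj_val (j : {ffun 'I_K -> 'I_K}) (i : 'I_K) : ((inord (j i + i) : 'I_W) : nat) = (j i + i)%N.
Proof.
rewrite inordK //; have := ltn_ord (j i); have := ltn_ord i; lia.
Qed.

Lemma key (j1 j2 : {ffun 'I_K -> 'I_K}) : monof j1 -> monof j2 -> Sj j1 = Sj j2 ->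
  forall i : 'I_K, (forall i' : 'I_K, (i' < i)%N -> j1 i' = j2 i') -> (j1 i <= j2 i)%N.
Proof.
move=> m1 m2 eS i IH; rewrite leqNgt; apply/negP => hlt.
have : (inord (j2 i + i) : 'I_W) \in Sj j1 by rewrite eS; apply/imsetP; exists i.
case/imsetP => i' _ e.
have ev : (j2 i + i = j1 i' + i')%N by rewrite -(Sj_val j2 i) -(Sj_val j1 i') e.
case: (ltngtP i' i) => h.
- have e' := IH i' h; have := m2 i' i (ltnW h); rewrite -e'; lia.
- have := m1 i i' (ltnW h); lia.
- have ei : i' = i by apply: val_inj.
  rewrite ei in ev; lia.
Qed.

Lemma mono_eq (j1 j2 : {ffun 'I_K -> 'I_K}) : monof j1 -> monof j2 -> Sj j1 = Sj j2 -> j1 = j2.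
Proof.
move=> m1 m2 eS.
have H : forall m (i : 'I_K), (i < m)%N -> j1 i = j2 i.
  elim=> [//|m IH] i him.
  have IH' : forall i' : 'I_K, (i' < i)%N -> j1 i' = j2 i'.
    by move=> i' h; apply: IH; apply: leq_trans h _; rewrite -ltnS.
  apply: val_inj; apply/eqP; rewrite eqn_leq (key _ _ m1 m2 eS _ IH') /=.
  apply: (key _ _ m2 m1 (esym eS)) => i' h; exact/esym/IH'.
apply/ffunP => i; exact: (H K).
Qed.

End Card.

Lemma card_good n k :
  (#|[pred p : IT n k | good p]| <= (2 * n).+1 * 4 ^ k.+1 * 2 ^ (k.+1 + k).+1)%N.
Proof.
pose f (p : IT n k) : ('I_(2 * n).+1 * {ffun 'I_k.+1 -> 'I_4} * {set 'I_(k.+1 + k).+1})%type :=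
  (p.1.1, p.1.2, Sj k p.2).
have hinj : {in [pred p : IT n k | good p] &, injective f}.
  move=> [[a1 d1] j1] [[a2 d2] j2]; rewrite !inE => g1 g2 [ea ed ej].
  case/and3P: g1 => _ _ /forallP h1; case/and3P: g2 => _ _ /forallP h2.
  have m1 : monof k j1 by move=> i i' hii'; have := h1 i => /forallP /(_ i') /implyP; apply.
  have m2 : monof k j2 by move=> i i' hii'; have := h2 i => /forallP /(_ i') /implyP; apply.
  by rewrite ea ed (mono_eq _ _ _ m1 m2 ej).
apply: (leq_trans (leq_card_in _ _ hinj)).
rewrite !card_prod card_ord card_ffun !card_ord -cardsT -powersetT card_powerset cardsT card_ord.
by [].
Qed.

Lemma lerXn (R : realType) (a b : R) n : 0 <= a -> a <= b -> a ^+ n <= b ^+ n.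
Proof.
move=> a0 ab; elim: n => [|n IH]; first by rewrite !expr0.
rewrite !exprS; apply: ler_pM => //; exact: exprn_ge0.
Qed.

Lemma numeric (R : realType) (C : R) (c K : nat) (nn q : R) :
  C <= c%:R -> 1 <= nn -> 0 <= q -> q <= expR (- (c%:R + 2)) ->
  ln nn < K%:R + 1 -> (c%:R + 4 : R) <= K%:R ->
  (2 * nn + 1) * q ^+ K < 1 / nn `^ C.
Proof.
move=> Cc n1 q0 qe hlnK cK.
have nn0 : 0 < nn by apply: lt_le_trans n1; rewrite ltr01.
have pC : 0 < nn `^ C by apply: powR_gt0.
have pc : nn `^ C <= nn ^+ c by rewrite -powR_mulrn ?(ltW nn0) //; exact: (ler_powR n1 Cc).
have E1 : q ^+ K <= expR (- (c%:R + 2) * K%:R) by rewrite expRM_natr; exact: lerXn.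
have E2 : nn ^+ c.+1 <= expR ((K%:R + 1) * c.+1%:R).
  have hl : expR (ln nn) = nn by rewrite lnK // posrE.
  rewrite -{1}hl.
  rewrite -expRM_natr ler_expR ler_wpM2r // ?ler0n //; exact: ltW hlnK.
have E3 : expR ((K%:R + 1) * c.+1%:R + (- (c%:R + 2) * K%:R)) <= expR (-3 : R).
  rewrite ler_expR -natr1; nra.
rewrite expRD in E3.
have E4 : 3 * expR (-3) < (1 : R).
  rewrite expRN; have := expR_ge1Dx (3 : R); have := expR_gt0 (3 : R).
  move=> h0 h1; rewrite -[X in _ < X](divff (lt0r_neq0 h0)) ltr_pM2r ?invr_gt0 //; lra.
rewrite ltr_pdivlMr //.
have q0' : 0 <= q ^+ K by exact: exprn_ge0.
have hA : (2 * nn + 1) * q ^+ K * nn `^ C <= 3 * (nn ^+ c.+1 * q ^+ K).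
  have -> : 3 * (nn ^+ c.+1 * q ^+ K) = (3 * nn * q ^+ K) * nn ^+ c by rewrite exprS; ring.
  apply: ler_pM; last exact: pc.
  - by apply: mulr_ge0 => //; apply: addr_ge0 => //; apply: mulr_ge0 => //; exact: ltW.
  - exact: ltW.
  apply: ler_wpM2r => //; lra.
apply: le_lt_trans hA _.
apply: le_lt_trans E4; apply: ler_wpM2l; first by rewrite ler0n.
apply: le_trans E3; apply: ler_pM => //; apply: exprn_ge0; exact: ltW.
Qed.


Lemma abszK' (z : int) : 0 <= z -> (absz z)%:Z = z.
Proof. lia. Qed.

Theorem mainTheorem4 (R : realType) (d : measure_display) (T : measurableType d)
    (P : probability T R) (A : site -> site -> T -> set R) :
  indep_poisson_family P A ->
  forall C : R, exists N : nat, forall n : nat, (N <= n)%N ->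
    exists B : set T, measurable B /\
      [set w | ~ (I_procV A w (segment0 n) 1 `<=` box R n)] `<=` B /\
      (P B < (1 / (n%:R `^ C))%:E)%E.
Proof.
move=> HP C.
have absz_ge : forall z : int, z <= (absz z)%:Z by move=> z; lia.
pose c : nat := absz (Num.ceil C).
have Cc : C <= c%:R.
  apply: le_trans (ceil_ge C) _.
  rewrite -[(c%:R : R)]/(((c%:Z)%:~R) : R) ler_int; exact: absz_ge.
pose L : R := Num.max ((16 * expR (c%:R + 2)) ^+ 2) (c%:R + 4).
have L4 : c%:R + 4 <= L by rewrite le_max lexx orbT.
have L16 : (16 * expR (c%:R + 2)) ^+ 2 <= L by rewrite le_max lexx.
have L0 : 0 <= L by apply: le_trans L4; rewrite addr_ge0 // ler0n.
pose N : nat := absz (Num.ceil (expR (L + 1))).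
exists N => n hn.
have hN : expR (L + 1) <= n%:R.
  apply: le_trans (ceil_ge _) _.
  have hh : ((Num.ceil (expR (L + 1)))%:~R : R) <= (N%:Z)%:~R by rewrite ler_int; exact: absz_ge.
  apply: le_trans hh _.
  by rewrite -[X in _ <= X]/(((n%:Z)%:~R) : R) ler_int lez_nat.
have e1 : 1 <= expR (L + 1).
  by apply: le_trans (expR_ge1Dx _); lra.
have n1 : (1 : R) <= n%:R by apply: le_trans hN.
have n0 : (0 : R) < n%:R by apply: lt_le_trans n1; rewrite ltr01.
have lnn : L + 1 <= ln (n%:R : R).
  by rewrite -[L + 1]expRK ler_ln ?posrE ?expR_gt0.
have ln0 : (0 : R) <= ln (n%:R : R) by apply: le_trans lnn; lra.
pose K := absz (Num.floor (ln (n%:R : R))).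
have eKz : (K%:Z) = Num.floor (ln (n%:R : R)).
  by apply: abszK'; rewrite floor_ge0.
have fl : (K%:R : R) <= ln (n%:R : R) /\ ln (n%:R : R) < K%:R + 1.
  have := floor_itv (ln (n%:R : R)); case/andP => h1 h2.
  rewrite -[(K%:R : R)]/(((K%:Z)%:~R) : R) eKz; split => //.
  by rewrite -intrD1.
have KL : L < K%:R by case: fl => _ h; lra.
have K4 : (c%:R + 4 : R) <= K%:R by apply: le_trans L4 (ltW KL).
have K0 : (0 < K)%N.
  have h : (0 : R) < K%:R by apply: lt_le_trans K4; have := ler0n R c; lra.
  by rewrite -(ltr_nat R).
pose k := K.-1.
have eK : K = k.+1 by rewrite /k prednK.
exists (Bset A n k).
have [hm hp] := Bset_bound _ _ _ _ _ HP n k.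
split; first exact: hm.
split.
  have hc : ((k.+1)%:R : R) <= ln (n%:R : R) by rewrite -eK; exact: fl.1.
  exact: (cover_bad hc).
apply: le_lt_trans hp _; rewrite lte_fin.
have hc := card_good n k.
set b := Num.sqrt (k.+1)%:R / (k.+1)%:R.
set sK := Num.sqrt ((k.+1)%:R : R).
have sK0 : 0 < sK by rewrite sqrtr_gt0 ltr0n.
have eb : b = sK^-1.
  rewrite /b -[X in _ / X](@sqr_sqrtr _ ((k.+1)%:R : R)) ?ler0n // -/sK expr2 invfM mulrA divff ?mul1r //.
  exact: lt0r_neq0.
have b0 : 0 <= b by rewrite eb invr_ge0 ltW.
have h1 : #|[pred p : IT n k | good p]|%:R * b ^+ k.+1 <=
    ((2 * n).+1 * 4 ^ k.+1 * 2 ^ (k.+1 + k).+1)%:R * b ^+ k.+1.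
  apply: ler_wpM2r; first exact: exprn_ge0.
  by rewrite ler_nat.
have e2 : ((2 * n).+1 * 4 ^ k.+1 * 2 ^ (k.+1 + k).+1)%:R * b ^+ k.+1 =
    ((2 * n).+1)%:R * (16 * b) ^+ k.+1.
  have -> : (2 ^ (k.+1 + k).+1 = 4 ^ k.+1)%N by rewrite -addnS addnn -mul2n expnM.
  have -> : (16 : R) = 4 * 4 by rewrite -natrM.
  by rewrite !natrM !natrX !exprMn -!mulrA.
have e3 : (((2 * n).+1)%:R : R) = 2 * n%:R + 1 by rewrite -addn1 natrD natrM.
apply: le_lt_trans h1 _; rewrite e2 e3.
have e16 : 0 < 16 * expR (c%:R + 2 : R) by apply: mulr_gt0; [rewrite ltr0n | apply: expR_gt0].
have hs : 16 * expR (c%:R + 2 : R) <= sK.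
  rewrite -[X in X <= _]gtr0_norm // -sqrtr_sqr /sK ler_wsqrtr //.
  apply: le_trans L16 _; rewrite -eK; exact: ltW.
apply: numeric.
- exact: Cc.
- exact: n1.
- by rewrite mulr_ge0.
- rewrite eb expRN ler_pdivrMr // mulrC ler_pdivlMr ?expR_gt0 //.
- rewrite -eK; exact: (proj2 fl).
- rewrite -eK; exact: K4.
Qed.
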